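(* If $A_0\in G$ fixes $Q$, then $A_0$ leaves invariant the subgroup $H_Q\le H_\Gamma$ generated by the images of the elements of $\mathrm{supp}\,Q$.
   Context: $\Gamma$ is a finite simplicial graph with vertex set $X$, $|X|=2g$, $A_\Gamma$ its right-angled Artin group, $H_\Gamma$ its abelianization, $L=X\cup X^{-1}$, $\bar u\in X$ the vertex of $u\in L$; $\mathrm{lk}(v)$ = neighbours, $\mathrm{st}(v)=\mathrm{lk}(v)\cup\{v\}$; domination $v\ge w$ iff $\mathrm{lk}(w)\subset\mathrm{st}(v)$. Fix a bijection $u\mapsto u^*$ of $L$ with $(u^* )^*=u^{-1}$ and letters $a_1,\dots,a_g\in L$ whose vertices together with those of $a_1^*,\dots,a_g^*$ are all of $X$; $Q=\sum\{[a_i]\wedge[a_i^*]: \bar a_i^*\text{ adjacent to }\bar a_i\}\in\Lambda^2H_\Gamma$, assumed nonzero, with $\mathrm{Aut}\,H_\Gamma$ acting diagonally on $\Lambda^2 H_\Gamma$. $\mathrm{supp}\,Q$ is the set of vertices appearing in $Q$. For $a\in X$, $b\in\mathrm{supp}\,Q$ with $a\ge b$, $a\ne b$, $E_{a,b}\in\mathrm{Aut}\,H_\Gamma$ sends $[b]\mapsto[b]+[a]$ and fixes $[x]$ for $x\ne b$; $N_b$ sends $[b]\mapsto-[b]$ and fixes the other basis elements. $G$ is the subgroup of $\mathrm{Aut}\,H_\Gamma$ generated by these $E_{a,b}$ and the $N_b$, $b\in\mathrm{supp}\,Q$. *)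

(* Defs.v *)
From mathcomp Require Import all_boot all_order all_algebra.
Set Implicit Arguments. Unset Strict Implicit. Unset Printing Implicit Defensive.
Import GRing.Theory Num.Theory.
Local Open Scope ring_scope.

(* Vertex set X is modelled as 'I_n (with n = 2g imposed in the theorem).
   H_Gamma = Z^X is modelled as integer column vectors 'cV[int]_n, with
   basis vector [x] = basis x. *)

(* Letters L = X u X^{-1}: (x, false) is x, (x, true) is x^{-1}. *)
Definition letter (n : nat) := ('I_n * bool)%type.
Definition vert n (u : letter n) : 'I_n := u.1.
Definition linv n (u : letter n) : letter n := (u.1, ~~ u.2).

Definition basis n (x : 'I_n) : 'cV[int]_n := delta_mx x 0.
Definition lclass n (u : letter n) : 'cV[int]_n :=
  (-1) ^+ u.2 *: basis (vert u).

(* Lambda^2 H_Gamma modelled as alternating integer matrices: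
   x /\ y  |->  x y^T - y x^T ; the diagonal action of A is w |-> A w A^T,
   so that wact A (wedge x y) = wedge (A x) (A y). *)
Definition wedge n (x y : 'cV[int]_n) : 'M[int]_n := x *m y^T - y *m x^T.
Definition wact n (A w : 'M[int]_n) : 'M[int]_n := A *m w *m A^T.

(* Domination v >= w iff lk(w) is contained in st(v). *)
Definition dominates n (adj : rel 'I_n) (v w : 'I_n) : Prop :=
  forall x, adj w x -> x = v \/ adj v x.

Definition Qform n g (adj : rel 'I_n) (star : letter n -> letter n)
    (a : 'I_g -> letter n) : 'M[int]_n :=
  \sum_(i < g | adj (vert (a i)) (vert (star (a i))))
     wedge (lclass (a i)) (lclass (star (a i))).

Definition suppQ n g (adj : rel 'I_n) (star : letter n -> letter n)
    (a : 'I_g -> letter n) (x : 'I_n) : bool :=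
  [exists i : 'I_g, adj (vert (a i)) (vert (star (a i)))
                    && ((x == vert (a i)) || (x == vert (star (a i))))].

Definition Emx n (a b : 'I_n) : 'M[int]_n := 1%:M + delta_mx a b.
Definition Nmx n (b : 'I_n) : 'M[int]_n := 1%:M - 2%:R *: delta_mx b b.

Inductive Ggen n (adj : rel 'I_n) (S : 'I_n -> bool) : 'M[int]_n -> Prop :=
  | GgenE (a b : 'I_n) : S b -> dominates adj a b -> a != b -> Ggen adj S (Emx a b)
  | GgenN (b : 'I_n) : S b -> Ggen adj S (Nmx b).

Inductive inG n (adj : rel 'I_n) (S : 'I_n -> bool) : 'M[int]_n -> Prop :=
  | inG_gen M : Ggen adj S M -> inG adj S M
  | inG_one : inG adj S 1%:M
  | inG_mul A B : inG adj S A -> inG adj S B -> inG adj S (A *m B)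
  | inG_inv A : inG adj S A -> inG adj S (invmx A).

Definition inHQ n (S : 'I_n -> bool) (v : 'cV[int]_n) : Prop :=
  exists c : 'I_n -> int, v = \sum_(b < n | S b) c b *: basis b.

(* Main.v *)
Require Import Defs.
From mathcomp Require Import all_boot all_order all_algebra ring.
Set Implicit Arguments. Unset Strict Implicit. Unset Printing Implicit Defensive.
Import GRing.Theory Num.Theory.
Local Open Scope ring_scope.

Lemma lclassE n (u : letter n) x j :
  lclass u x j = (-1)^+u.2 * (x == vert u)%:R.
Proof. by rewrite /lclass /basis !mxE (ord1 j) eqxx andbT. Qed.

Lemma QformE n g adj star (a : 'I_g -> letter n) x k :
  Qform adj star a x k =
  \sum_(j < g | adj (vert (a j)) (vert (star (a j))))
  ((-1)^+(a j).2 * (-1)^+(star (a j)).2) *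
   ((x == vert (a j))%:R * (k == vert (star (a j)))%:R
    - (x == vert (star (a j)))%:R * (k == vert (a j))%:R).
Proof.
rewrite /Qform summxE; apply: eq_bigr => j _.
rewrite /wedge !mxE !big_ord1 !mxE !eqxx !andbT; ring.
Qed.

Lemma inHQP n (S : 'I_n -> bool) (v : 'cV[int]_n) :
  inHQ S v <-> forall x, ~~ S x -> v x 0 = 0.
Proof.
split.
  move=> [c ->] x Sx; rewrite summxE big1 // => b Sb.
  rewrite /basis !mxE; case: eqP => [exb|]; last by rewrite mulr0.
  by rewrite exb Sb in Sx.
move=> H; exists (fun b => v b 0); apply/matrixP => x y.
rewrite (ord1 y) summxE.
case Sx: (S x).
  rewrite (bigD1 x) //= big1 ?addr0; first by rewrite /basis !mxE !eqxx mulr1.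
  move=> b /andP [_ hb]; rewrite /basis !mxE eq_sym (negbTE hb) mulr0 //.
rewrite H ?Sx // big1 // => b Sb; rewrite /basis !mxE; case: eqP => [exb|]; last by rewrite mulr0.
by rewrite exb Sb in Sx.
Qed.

Lemma inG_unit n adj S (A : 'M[int]_n) : inG adj S A -> A \in unitmx.
Proof.
elim => [M [x y _ _ hxy | b _] | | A1 B _ hA _ hB | A1 _ hA].
- apply: (proj1 (@mulmx1_unit _ _ _ (1%:M - delta_mx x y) _)).
  rewrite /Emx mulmxDl mul1mx mulmxBr mulmx1 mul_delta_mx_cond eq_sym (negbTE hxy).
  by rewrite mulr0n subr0 subrK.
- apply: (proj1 (@mulmx1_unit _ _ _ (Nmx b) _)).
  rewrite /Nmx mulmxBl mul1mx mulmxBr mulmx1 -!scalemxAl -!scalemxAr mul_delta_mx_cond eqxx mulr1n.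
  rewrite scalerA; apply/matrixP => i j; rewrite !mxE.
  case: (_ && _); rewrite /=; ring.
- exact: unitmx1.
- by rewrite unitmx_mul hA hB.
- by rewrite unitmx_inv.
Qed.

Definition fv n g (star : letter n -> letter n) (a : 'I_g -> letter n)
  (t : ('I_g + 'I_g)%type) : 'I_n :=
  match t with inl i => vert (a i) | inr i => vert (star (a i)) end.

Lemma fv_inj n g star (a : 'I_g -> letter n) (hn : n = (2 * g)%N)
  (cover : forall x : 'I_n, exists i : 'I_g, x = vert (a i) \/ x = vert (star (a i))) :
  injective (fv star a).
Proof.
have H : {in predT &, injective (fv star a)}.
  apply/image_injP.
  have -> : #|[seq fv star a x | x in predT]| = #|'I_n|.
    apply: eq_card => x; rewrite !inE; apply/mapP.
    have [i [->|->]] := cover x.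
      by exists (inl i); rewrite ?mem_enum.
    by exists (inr i); rewrite ?mem_enum.
  by rewrite card_ord cardT -cardE card_sum card_ord hn mul2n addnn.
by move=> x y; apply: H.
Qed.

Lemma mul_basisE n (M : 'M[int]_n) k0 x y : (M *m basis k0) x y = M x k0.
Proof.
rewrite !mxE (bigD1 k0) //= big1 ?addr0; first by rewrite /basis mxE eqxx (ord1 y) eqxx mulr1.
by move=> k hk; rewrite /basis mxE (negbTE hk) mulr0.
Qed.

Lemma sgsq (b : bool) : ((-1) ^+ b : int) * (-1) ^+ b = 1.
Proof. by case: b; rewrite /= ?expr1 ?expr0 ?mulr1 ?mulrNN ?mulr1. Qed.

Section K.
Variables (n g : nat) (adj : rel 'I_n) (star : letter n -> letter n) (a : 'I_g -> letter n).
Hypothesis inj : injective (fv star a).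

Local Notation va j := (vert (a j)).
Local Notation vs j := (vert (star (a j))).

Lemma neq_as j i : (va j == vs i) = false.
Proof. by apply/eqP => h; have := inj (x1 := inl j) (x2 := inr i) h. Qed.
Lemma eq_ss j i : (vs j == vs i) = (j == i).
Proof.
apply/eqP/eqP => [h|->//]; by have := inj (x1 := inr j) (x2 := inr i) h => -[].
Qed.
Lemma eq_aa j i : (va j == va i) = (j == i).
Proof.
apply/eqP/eqP => [h|->//]; by have := inj (x1 := inl j) (x2 := inl i) h => -[].
Qed.

Lemma Qcol_s i x : adj (va i) (vs i) ->
  Qform adj star a x (vs i) = (-1)^+(a i).2 * (-1)^+(star (a i)).2 * (x == va i)%:R.
Proof.
move=> hi; rewrite QformE (bigD1 i) //= big1 ?addr0.
  by rewrite eqxx [vs _ == va _]eq_sym neq_as mulr0 subr0 mulr1.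
move=> j /andP [_ hj]; rewrite eq_ss [i == _]eq_sym (negbTE hj) [vs _ == va _]eq_sym neq_as.
by rewrite !(mulr0, mul0r, subrr, subr0).
Qed.

Lemma Qcol_a i x : adj (va i) (vs i) ->
  Qform adj star a x (va i) = - ((-1)^+(a i).2 * (-1)^+(star (a i)).2 * (x == vs i)%:R).
Proof.
move=> hi; rewrite QformE (bigD1 i) //= big1 ?addr0.
  by rewrite eqxx neq_as mulr0 sub0r mulr1 mulrN.
move=> j /andP [_ hj]; rewrite neq_as eq_aa [i == _]eq_sym (negbTE hj).
by rewrite !(mulr0, mul0r, subrr, subr0).
Qed.

Lemma Q_hits b : suppQ adj star a b ->
  exists w : 'cV[int]_n, Qform adj star a *m w = basis b.
Proof.
case/existsP => i /andP [hi /orP [] /eqP ->].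
  exists (((-1)^+(a i).2 * (-1)^+(star (a i)).2) *: basis (vs i)).
  apply/matrixP => x y; rewrite -scalemxAr mxE mul_basisE Qcol_s //.
  rewrite /basis mxE (ord1 y) eqxx andbT mulrA.
  by rewrite -(mulrA ((-1)^+ _)) (mulrC ((-1)^+ (star _).2)) !mulrA sgsq mul1r sgsq mul1r.
exists (- ((-1)^+(a i).2 * (-1)^+(star (a i)).2) *: basis (va i)).
apply/matrixP => x y; rewrite -scalemxAr mxE mul_basisE Qcol_a //.
rewrite /basis mxE (ord1 y) eqxx andbT mulrN mulNr opprK mulrA.
by rewrite -(mulrA ((-1)^+ _)) (mulrC ((-1)^+ (star _).2)) !mulrA sgsq mul1r sgsq mul1r.
Qed.

Lemma Q_in_HQ (w : 'cV[int]_n) : inHQ (suppQ adj star a) (Qform adj star a *m w).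
Proof.
apply/inHQP => x Sx; rewrite mxE big1 // => k _.
rewrite QformE big1 ?mul0r // => j hj.
suff [-> ->] : (x == va j) = false /\ (x == vs j) = false by rewrite !mul0r subrr mulr0.
split; apply/negbTE/eqP => e; move/negP: Sx; apply; apply/existsP; exists j;
  by rewrite hj e eqxx ?orbT.
Qed.
End K.
Import GRing.Theory.

Theorem lemma4p5 (n g : nat) (hn : n = (2 * g)%N)
  (adj : rel 'I_n) (adj_sym : symmetric adj) (adj_irr : irreflexive adj)
  (star : letter n -> letter n) (star_bij : bijective star)
  (star_inv : forall u, star (star u) = linv u)
  (a : 'I_g -> letter n)
  (a_cover : forall x : 'I_n,
      exists i : 'I_g, x = vert (a i) \/ x = vert (star (a i)))
  (Q_nz : Qform adj star a != 0)
  (A0 : 'M[int]_n) (A0_G : inG adj (suppQ adj star a) A0)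
  (A0_fix : wact A0 (Qform adj star a) = Qform adj star a) :
  forall v : 'cV[int]_n,
    inHQ (suppQ adj star a) v -> inHQ (suppQ adj star a) (A0 *m v).
Proof.
have inj := fv_inj hn a_cover.
have hU := inG_unit A0_G.
have hAQ : A0 *m Qform adj star a = Qform adj star a *m invmx A0^T.
  by rewrite -{2}A0_fix /wact mulmxK // unitmx_tr.
have hb : forall b, suppQ adj star a b -> inHQ (suppQ adj star a) (A0 *m basis b).
  move=> b /(Q_hits inj) [w <-]; rewrite mulmxA hAQ -mulmxA; exact: Q_in_HQ.
move=> v [c ->]; apply/inHQP => x Sx.
rewrite mulmx_sumr summxE big1 // => b Sb.
rewrite -scalemxAr mxE.
by rewrite (proj1 (inHQP _ _) (hb b Sb) x Sx) mulr0.
Qed.
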